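(* The reduction relation $\Rightarrow$ of Combinatory ReFLect (CR) is not strongly normalizing: there exists a well-typed CR term that has an infinite reduction sequence.
   Context: Combinatory ReFLect (CR) is defined as follows. Types: $\sigma ::= \mathsf{bool} \mid \mathsf{unit} \mid \mathsf{term} \mid \sigma_1 \to \sigma_2$. Terms: $e ::= \mathsf{I}_\sigma \mid \mathsf{K}_{\sigma,\tau} \mid \mathsf{S}_{\sigma,\tau,\upsilon} \mid \mathsf{value}_\sigma \mid \mathsf{lift} \mid \mathsf{app} \mid e_1\,e_2 \mid \ulcorner e\urcorner$, where $\sigma,\tau,\upsilon$ range over types and $\ulcorner e\urcorner$ is the quotation of $e$. Typing rules: $\mathsf{I}_\sigma:\sigma\to\sigma$; $\mathsf{K}_{\sigma,\tau}:\sigma\to\tau\to\sigma$; $\mathsf{S}_{\sigma,\tau,\upsilon}:(\sigma\to\tau\to\upsilon)\to(\sigma\to\tau)\to\sigma\to\upsilon$; $\mathsf{value}_\sigma:\mathsf{term}\to\sigma$; $\mathsf{lift}:\mathsf{term}\to\mathsf{term}$; $\mathsf{app}:\mathsf{term}\to\mathsf{term}\to\mathsf{term}$; if $e_1:\sigma\to\tau$ and $e_2:\sigma$ then $e_1\,e_2:\tau$; if $e:\sigma$ then $\ulcorner e\urcorner:\mathsf{term}$. The reduction relation $\Rightarrow$ is the reflexive, transitive, congruence closure of: $\mathsf{I}_\sigma\,e\Rightarrow e$; $\mathsf{K}_{\sigma,\tau}\,e_1\,e_2\Rightarrow e_1$; $\mathsf{S}_{\sigma,\tau,\upsilon}\,e_1\,e_2\,e_3\Rightarrow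 e_1\,e_3\,(e_2\,e_3)$; if $e:\sigma$ then $\mathsf{value}_\sigma\,\ulcorner e\urcorner\Rightarrow e$; $\mathsf{lift}\,\ulcorner s\urcorner\Rightarrow\ulcorner\ulcorner s\urcorner\urcorner$; if $e_1\,e_2$ is well typed then $\mathsf{app}\,\ulcorner e_1\urcorner\,\ulcorner e_2\urcorner\Rightarrow\ulcorner e_1\,e_2\urcorner$. (Application associates to the left.) *)

(* Defs.v *)
Inductive ty : Type :=
| Tbool : ty
| Tunit : ty
| Tterm : ty
| Tarr : ty -> ty -> ty.

Inductive tm : Type :=
| I_ : ty -> tm
| K_ : ty -> ty -> tm
| S_ : ty -> ty -> ty -> tm
| value_ : ty -> tm
| lift : tm
| app : tm
| App : tm -> tm -> tm
| Quote : tm -> tm.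

Inductive has_type : tm -> ty -> Prop :=
| T_I : forall s, has_type (I_ s) (Tarr s s)
| T_K : forall s t, has_type (K_ s t) (Tarr s (Tarr t s))
| T_S : forall s t u,
    has_type (S_ s t u)
      (Tarr (Tarr s (Tarr t u)) (Tarr (Tarr s t) (Tarr s u)))
| T_value : forall s, has_type (value_ s) (Tarr Tterm s)
| T_lift : has_type lift (Tarr Tterm Tterm)
| T_app : has_type app (Tarr Tterm (Tarr Tterm Tterm))
| T_App : forall e1 e2 s t,
    has_type e1 (Tarr s t) -> has_type e2 s -> has_type (App e1 e2) t
| T_Quote : forall e s, has_type e s -> has_type (Quote e) Tterm.

Definition well_typed (e : tm) : Prop := exists s, has_type e s.

Inductive root_step : tm -> tm -> Prop :=
| R_I : forall s e, root_step (App (I_ s) e) e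
| R_K : forall s t e1 e2, root_step (App (App (K_ s t) e1) e2) e1
| R_S : forall s t u e1 e2 e3,
    root_step (App (App (App (S_ s t u) e1) e2) e3) (App (App e1 e3) (App e2 e3))
| R_value : forall s e, has_type e s -> root_step (App (value_ s) (Quote e)) e
| R_lift : forall e, root_step (App lift (Quote e)) (Quote (Quote e))
| R_app : forall e1 e2, well_typed (App e1 e2) ->
    root_step (App (App app (Quote e1)) (Quote e2)) (Quote (App e1 e2)).

Inductive step : tm -> tm -> Prop :=
| St_root : forall e e', root_step e e' -> step e e'
| St_App1 : forall e1 e1' e2, step e1 e1' -> step (App e1 e2) (App e1' e2)
| St_App2 : forall e1 e2 e2', step e2 e2' -> step (App e1 e2) (App e1 e2')
| St_Quote : forall e e', step e e' -> step (Quote e) (Quote e').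

Inductive reduces : tm -> tm -> Prop :=
| Red_refl : forall e, reduces e e
| Red_step : forall e1 e2 e3, step e1 e2 -> reduces e2 e3 -> reduces e1 e3.

Definition has_infinite_reduction (e : tm) : Prop :=
  exists f : nat -> tm, f 0 = e /\ forall n, step (f n) (f (S n)).

(* Main.v *)
Require Import Defs.

Definition V := value_ (Tarr Tterm Tterm).
Definition w := App (App (S_ Tterm Tterm Tterm) V) (I_ Tterm).
Definition e0 := App w (Quote w).
Definition e1 := App (App V (Quote w)) (App (I_ Tterm) (Quote w)).
Definition e2 := App (App V (Quote w)) (Quote w).

Fixpoint cyc (n : nat) : tm :=
  match n with
  | 0 => e0
  | 1 => e1
  | 2 => e2
  | S (S (S k)) => cyc k
  end.

Lemma w_ty : has_type w (Tarr Tterm Tterm).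
Proof.
  unfold w, V. econstructor. econstructor. apply T_S. apply T_value. apply T_I.
Qed.

Lemma s0 : step e0 e1.
Proof. apply St_root. unfold e0, w. apply R_S. Qed.
Lemma s1 : step e1 e2.
Proof. apply St_App2. apply St_root. apply R_I. Qed.
Lemma s2 : step e2 e0.
Proof. apply St_App1. apply St_root. unfold V. apply R_value. apply w_ty. Qed.

Lemma cyc_step : forall n, step (cyc n) (cyc (S n)) /\ step (cyc (S n)) (cyc (S (S n)))
  /\ step (cyc (S (S n))) (cyc (S (S (S n)))).
Proof.
  induction n as [|n [A [B C]]].
  - split; [exact s0|split; [exact s1|exact s2]].
  - split; [exact B|split; [exact C|]]. simpl. exact A.
Qed.

Theorem theorem1 : exists e : tm, well_typed e /\ has_infinite_reduction e.
Proof.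
  exists e0. split.
  - exists Tterm. unfold e0. econstructor. apply w_ty. econstructor. apply w_ty.
  - exists cyc. split; [reflexivity|]. intro n. apply (cyc_step n).
Qed.
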